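(* Let $\ell,d\ge0$ be integers and $a=(a_1,\dots,a_\ell)\in\{1,\dots,n\}^\ell$. In $W_\eta(2n)$ the following two elements are equal: (i) the sum of all degree-$d$ mixed $x\partial$-monomials indexed by $a$, i.e. $\sum_{T}z_T^{a_1}z_T^{a_2}\cdots z_T^{a_\ell}$, where $T$ runs over subsets of $\{1,\dots,\ell\}$ with $\ell-2|T|=d$, and $z_T^{a_i}=\partial^{a_i}$ if $i\in T$, $z_T^{a_i}=x^{a_i}$ if $i\notin T$; (ii) the sum of all distinct degree-$d$ ordered $\eta x\partial$-monomials indexed by permutations of $a$, i.e. $$\sum_{(M,X)}\ \prod_{\{i,j\}\in M}\eta^{a_ia_j}\prod_{k\in X}x^{a_k}\prod_{k\in U_M\setminus X}\partial^{a_k},$$ where $M$ runs over all sets of pairwise disjoint 2-element subsets of $\{1,\dots,\ell\}$, $U_M$ is the set of positions not covered by $M$, and $X$ runs over subsets of $U_M$ with $|X|-|U_M\setminus X|=d$ (within each product the $x$-factors are written before the $\partial$-factors).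
   Context: $W_\eta(2n)$ is the unital associative $\mathbb{C}$-algebra generated by $x^a,\partial_a$ ($a=1,\dots,n$) and central elements $\eta_{ab},\eta^{ab}$ subject to $x^ax^b=x^bx^a$, $\partial_a\partial_b=\partial_b\partial_a$, $\partial_ax^b-x^b\partial_a=\delta_a^b$, $\eta_{ab}=\eta_{ba}$, $\sum_b\eta_{ab}\eta^{bc}=\delta_a^c$. Put $\partial^a=\sum_b\eta^{ab}\partial_b$; then $\partial^a\partial^b=\partial^b\partial^a$ and $\partial^ax^b-x^b\partial^a=\eta^{ab}$. Grading: $\deg x^a=1$, $\deg\partial_a=\deg\partial^a=-1$, $\deg\eta=0$. In the paper's terminology an ordered $\eta x\partial$-monomial indexed by $b=(b_1,\dots,b_\ell)$ is $(\eta^{b_1b_2}\cdots\eta^{b_{2r-1}b_{2r}})(x^{b_{2r+1}}\cdots x^{b_{2r+s}})(\partial^{b_{2r+s+1}}\cdots\partial^{b_{2r+s+t}})$, of degree $s-t$; ''distinct'' means terms are counted once up to the symmetry $\eta^{ij}=\eta^{ji}$ and reordering of commuting factors, but positions in $a$ are regarded as distinct even if their values coincide; sum (ii) is the explicit sum written in the claim. *)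

(* Defs.v *)
From HB Require Import structures.
From mathcomp Require Import all_boot all_order all_algebra.
From mathcomp Require Import reals complex.
Set Implicit Arguments. Unset Strict Implicit. Unset Printing Implicit Defensive.
Import Order.TTheory GRing.Theory Num.Theory.
Local Open Scope ring_scope.

Definition Ctype (R : realType) := complex R.

(* A "W_eta(2n)-datum" in an algebra A: elements x^a, d_a (= \partial_a),
   eta_{ab}, eta^{ab} of A satisfying the defining relations of W_eta(2n).
   An identity holds in W_eta(2n) iff it holds for every such datum in every
   unital associative C-algebra A (universal property of the presentation). *)
Definition weyl_rel (A : ringType) (n : nat)
  (x dl : 'I_n -> A) (etal etau : 'I_n -> 'I_n -> A) : Prop :=
  (forall a b, x a * x b = x b * x a) /\
  (forall a b, dl a * dl b = dl b * dl a) /\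
  (forall a b, dl a * x b - x b * dl a = (a == b)%:R) /\
  (forall a b (y : A), etal a b * y = y * etal a b) /\
  (forall a b (y : A), etau a b * y = y * etau a b) /\
  (forall a b, etal a b = etal b a) /\
  (forall a c, \sum_(b < n) etal a b * etau b c = (a == c)%:R).

Definition dup (A : ringType) (n : nat) (etau : 'I_n -> 'I_n -> A)
  (dl : 'I_n -> A) (a : 'I_n) : A := \sum_(b < n) etau a b * dl b.

Definition mixed_sum (A : ringType) (n l d : nat) (x du : 'I_n -> A)
  (a : 'I_l -> 'I_n) : A :=
  \sum_(T : {set 'I_l} | l == (d + 2 * #|T|)%N)
     \prod_(i < l) (if i \in T then du (a i) else x (a i)).

Definition is_partial_matching (l : nat) (M : {set {set 'I_l}}) : bool :=
  [forall B in M, #|B| == 2%N] && trivIset M.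

Definition eta_block (A : ringType) (n l : nat) (etau : 'I_n -> 'I_n -> A)
  (a : 'I_l -> 'I_n) (B : {set 'I_l}) : A :=
  \prod_(i < l | i \in B) \prod_(j < l | (j \in B) && (i < j)%N) etau (a i) (a j).

Definition ordered_sum (A : ringType) (n l d : nat)
  (x du : 'I_n -> A) (etau : 'I_n -> 'I_n -> A) (a : 'I_l -> 'I_n) : A :=
  \sum_(M : {set {set 'I_l}} | is_partial_matching M)
   \sum_(X : {set 'I_l} | (X \subset ~: cover M) &&
                          (#|X| == d + #|(~: cover M) :\: X|)%N)
     ((\prod_(B in M) eta_block etau a B) *
      (\prod_(k < l | k \in X) x (a k)) *
      (\prod_(k < l | k \in (~: cover M) :\: X) du (a k))).

(* Main.v *)
Require Import Defs.
From HB Require Import structures.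
From mathcomp Require Import all_boot all_order all_algebra.
From mathcomp Require Import reals complex.
From mathcomp Require Import zify.
Local Open Scope ring_scope.

Module Aux.
Set Implicit Arguments. Unset Strict Implicit. Unset Printing Implicit Defensive.
Import Order.TTheory GRing.Theory Num.Theory.

Section Gen.
Variable A : ringType.

Lemma seq_cond_neq (I : eqType) (t : seq I) h (P : pred I) (F : I -> A) :
  h \notin t -> \prod_(i <- t | P i && (i != h)) F i = \prod_(i <- t | P i) F i.
Proof.
move=> hn; rewrite [LHS]big_seq_cond [RHS]big_seq_cond; apply: eq_bigl => i.
by case: (i =P h) => [->|_] /=; rewrite ?(negbTE hn) ?andbT ?andbF.
Qed.

Lemma big_comm_rem (I : eqType) (r : seq I) (P : pred I) (F : I -> A) i0 :
  uniq r -> i0 \in r -> P i0 -> (forall i, P i -> F i0 * F i = F i * F i0) ->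
  \prod_(i <- r | P i) F i = F i0 * \prod_(i <- r | P i && (i != i0)) F i.
Proof.
elim: r => //= h t IH /andP[hn ut]; rewrite in_cons => /orP[/eqP Eh|it] Pi0 C; first subst i0.
  rewrite !big_cons Pi0 eqxx /=; congr (_ * _).
  by rewrite seq_cond_neq.
have hi0 : h != i0 by apply: contraNneq hn => ->.
rewrite !big_cons hi0 andbT; case Ph: (P h); last exact: IH.
by rewrite (IH ut it Pi0 C) !mulrA C.
Qed.

Lemma big_first (I : eqType) (r : seq I) (P : pred I) (F : I -> A) i0 :
  uniq r -> i0 \in r -> P i0 ->
  (forall i, i \in r -> P i -> (index i0 r <= index i r)%N) ->
  \prod_(i <- r | P i) F i = F i0 * \prod_(i <- r | P i && (i != i0)) F i.
Proof.
elim: r => //= h t IH /andP[hn ut]; rewrite in_cons => /orP[/eqP Eh|it] Pi0 C; first subst i0.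
  rewrite !big_cons Pi0 eqxx /=; congr (_ * _).
  by rewrite seq_cond_neq.
have hi0 : h != i0 by apply: contraNneq hn => ->.
rewrite !big_cons hi0 andbT.
have Ph : P h = false.
  apply/negP => Ph; have := C h (mem_head _ _) Ph.
  by rewrite eqxx (negbTE hi0).
rewrite Ph; apply: IH => // i ti Pi.
have := C i (mem_behead (s := h :: t) ti) Pi; rewrite (negbTE hi0).
by case: (h =P i) => [hi|]; [rewrite hi ti in hn | ].
Qed.

Lemma comm_prod (I : eqType) (r : seq I) (P : pred I) (u : A) (f c : I -> A) :
  uniq r -> (forall i, u * f i = f i * u + c i) -> (forall i y, c i * y = y * c i) ->
  u * \prod_(k <- r | P k) f k = \prod_(k <- r | P k) f k * u +
     \sum_(j <- r | P j) c j * \prod_(k <- r | P k && (k != j)) f k.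
Proof.
move=> + uf cc; elim: r => [|h t IH] /=; first by rewrite !big_nil mulr1 mul1r addr0.
case/andP=> hn ut; rewrite [in LHS]big_cons [\prod_(k <- h :: t | P k) f k]big_cons.
rewrite [\sum_(j <- h :: t | P j) _]big_cons.
case Ph: (P h) => /=; last first.
  rewrite IH //; congr (_ + _); apply: eq_bigr => j _; by rewrite big_cons Ph.
rewrite big_cons Ph eqxx /= seq_cond_neq //.
rewrite mulrA uf mulrDl -mulrA IH // mulrDr !mulrA -addrA; congr (_ + _).
rewrite addrC; congr (_ + _).
rewrite mulr_sumr [LHS]big_seq_cond [RHS]big_seq_cond; apply: eq_bigr => j /andP[jt _].
have hj : (h != j) by apply: contraNneq hn => ->.
by rewrite big_cons Ph hj /= mulrA -cc -mulrA.
Qed.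

Lemma triple_eq (I J K : finType) (P1 : I -> bool) (P2 : I -> J -> bool)
  (P3 : I -> J -> K -> bool) (Q1 : J -> bool) (Q2 : J -> K -> bool)
  (Q3 : J -> K -> I -> bool) (F : I -> J -> K -> A) :
  (forall i j k, [&& P1 i, P2 i j & P3 i j k] = [&& Q1 j, Q2 j k & Q3 j k i]) ->
  \sum_(i | P1 i) \sum_(j | P2 i j) \sum_(k | P3 i j k) F i j k =
  \sum_(j | Q1 j) \sum_(k | Q2 j k) \sum_(i | Q3 j k i) F i j k.
Proof.
move=> E.
have N : forall (I J K : finType) (P1 : I -> bool) (P2 : I -> J -> bool)
  (P3 : I -> J -> K -> bool) (F : I -> J -> K -> A),
  \sum_(i | P1 i) \sum_(j | P2 i j) \sum_(k | P3 i j k) F i j k =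
  \sum_i \sum_j \sum_k (if [&& P1 i, P2 i j & P3 i j k] then F i j k else 0).
  move=> I' J' K' p1 p2 p3 G; rewrite big_mkcond; apply: eq_bigr => i _.
  case: (p1 i) => /=; last by rewrite big1 // => j _; rewrite big1.
  rewrite big_mkcond; apply: eq_bigr => j _.
  case: (p2 i j) => /=; last by rewrite big1.
  by rewrite big_mkcond.
rewrite N [RHS]N [LHS]exchange_big; apply: eq_bigr => j _.
rewrite [LHS]exchange_big; apply: eq_bigr => k _.
by apply: eq_bigr => i _; rewrite E.
Qed.

End Gen.

Section Match.
Variable l : nat.
Implicit Types (M : {set {set 'I_l}}) (B C S : {set 'I_l}) (m j y : 'I_l).

Lemma coverP y M : reflect (exists2 C, C \in M & y \in C) (y \in cover M).
Proof. exact: bigcupP. Qed.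

Lemma cover_U1 B M : cover (B |: M) = B :|: cover M.
Proof.
apply/setP => y; rewrite in_setU; apply/coverP/orP.
  case=> C; rewrite in_setU1 => /orP[/eqP->|CM yC]; first by left.
  by right; apply/coverP; exists C.
case=> [yB|/coverP[C CM yC]]; first by exists B; rewrite ?setU11.
by exists C; rewrite // in_setU1 CM orbT.
Qed.

Lemma partner M m : is_partial_matching M -> m \in cover M ->
  exists j, forall j', ([set m; j'] \in M) = (j' == j).
Proof.
case/andP => /forall_inP H2 tM mc.
have PM := pblock_mem mc; have mP : m \in pblock M m by rewrite mem_pblock.
have /cards2P [y [z [yz Pyz]]] := H2 _ PM.
have [j Ej] : exists j, pblock M m = [set m; j].
  move: mP; rewrite Pyz !inE => /orP[/eqP<-|/eqP<-]; first by exists z.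
  by exists y; rewrite setUC.
exists j => j'; apply/idP/eqP => [Hj'|->]; last by rewrite -Ej.
have := def_pblock tM Hj' (setU11 m [set j']); rewrite Ej => E.
have : j' \in [set m; j] by rewrite E !inE eqxx orbT.
rewrite !inE => /orP[/eqP Ejm|/eqP //].
by have := H2 _ Hj'; rewrite -Ejm setUid cards1.
Qed.

Lemma match_split S m j M' : m \in S ->
  let B := [set m; j] in
  ((is_partial_matching (B |: M') && (cover (B |: M') \subset S)) &&
    (m \in cover (B |: M')) && (B \in B |: M')) && ((B |: M') :\ B == M')
  = (j \in S :\ m) && (is_partial_matching M' && (cover M' \subset (S :\ m) :\ j)).
Proof.
move=> mS B; apply/idP/idP.
  case/andP => [/andP[/andP[/andP[/andP[/forall_inP H2 tM] cS] _] _] /eqP E].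
  have BM' : B \notin M' by rewrite -E setD11.
  have mj : m != j by have := H2 B (setU11 _ _); rewrite cards2; case: (m != j).
  have jS : j \in S.
    by apply: (subsetP cS); rewrite cover_U1 !inE eqxx !orbT.
  rewrite in_setD1 eq_sym mj jS /=.
  have sM : M' \subset B |: M' by apply/subsetP => C CM; rewrite in_setU1 CM orbT.
  apply/andP; split.
    apply/andP; split; last exact: trivIsetS tM.
    by apply/forall_inP => C CM; apply: H2; rewrite in_setU1 CM orbT.
  apply/subsetP => y /coverP [C CM yC].
  have CB : C != B by apply: contraNneq BM' => <-.
  have /trivIsetP/(_ C B) := tM; rewrite in_setU1 CM orbT setU11 => /(_ isT isT CB).
  move/disjointFr => /(_ y yC) /negbT; rewrite !inE negb_or => /andP[ym yj].
  rewrite ym yj /=; apply: (subsetP cS); rewrite cover_U1 in_setU.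

  by apply/orP; right; apply/coverP; exists C.
case/andP => jS /andP[/andP[/forall_inP H2 tM] cS].
move: jS; rewrite in_setD1 => /andP[jm jS].
have BM' : {in M', forall C, [disjoint B & C]}.
  move=> C CM; rewrite disjoint_sym disjoint_subset; apply/subsetP => y yC.
  have : y \in (S :\ m) :\ j by apply: (subsetP cS); apply/coverP; exists C.
  by rewrite !inE => /and3P[yj ym _]; rewrite negb_or yj ym.
have M0 : set0 \notin M'.
  by apply/negP => /H2; rewrite cards0.
have [tU BnM] := trivIsetU1 BM' tM M0.
rewrite setU11 setU1K // cover_U1 eqxx !andbT in_setU {3}/B setU11 /= andbT.
apply/andP; split; first (apply/andP; split => //).
  apply/forall_inP => C; rewrite in_setU1 => /orP[/eqP->|/H2 //].
  by move: jm; rewrite cards2 eq_sym => ->.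
rewrite subUset; apply/andP; split.
  by apply/subsetP => y; rewrite !inE => /orP[]/eqP->.
by apply: subset_trans cS _; apply/subsetP => y; rewrite !inE => /and3P[].
Qed.


Lemma subU1 (X U : {set 'I_l}) m : m \notin X -> (X \subset m |: U) = (X \subset U).
Proof.
move=> mX; apply/subsetP/subsetP => H y yX; last by rewrite in_setU1 H ?orbT.
have := H y yX; rewrite in_setU1 => /orP[/eqP Ey|//].
by move: mX; rewrite -Ey yX.
Qed.

Lemma setDUU1 (X U : {set 'I_l}) m : m \notin U -> (m |: U) :\: (m |: X) = U :\: X.
Proof.
move=> mU; apply/setP => y; rewrite !inE negb_or.
by case: (y =P m) => [->|] /=; rewrite ?(negbTE mU) ?andbF.
Qed.

Lemma setDU1X (X U : {set 'I_l}) m : m \notin X -> (m |: U) :\: X = m |: (U :\: X).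
Proof.
move=> mX; apply/setP => y; rewrite !inE.
by case: (y =P m) => [->|] /=; rewrite ?(negbTE mX) ?orbT.
Qed.

Lemma U1D1 (X : {set 'I_l}) j : (j |: (X :\ j) == X) = (j \in X).
Proof.
case jX: (j \in X); first by rewrite setD1K // eqxx.
by apply/negP => /eqP E; move: jX; rewrite -E setU11.
Qed.

Lemma subD1D1 (X U : {set 'I_l}) j : j \in X -> j \in U -> (X :\ j \subset U :\ j) = (X \subset U).
Proof.
move=> jX jU; apply/subsetP/subsetP => H y yX; last by rewrite !inE H ?andbT //; rewrite !inE in yX; case/andP: yX.
case: (y =P j) => [->//|/eqP yj].
by have := H y; rewrite !inE yj yX => /(_ isT) /andP[].
Qed.

Lemma setDD1D1 (X U : {set 'I_l}) j : j \in X -> (U :\ j) :\: (X :\ j) = U :\: X.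
Proof.
move=> jX; apply/setP => y; rewrite !inE.
by case: (y =P j) => [->|] /=; rewrite ?jX ?andbF.
Qed.

End Match.

Section Main.
Variables (A : ringType) (n l : nat) (x dl : 'I_n -> A) (etal etau : 'I_n -> 'I_n -> A).
Hypothesis Hrel : weyl_rel x dl etal etau.
Variable a : 'I_l -> 'I_n.

Local Notation du := (dup etau dl).
Implicit Types (M : {set {set 'I_l}}) (B X : {set 'I_l}).

Definition central (c : A) := forall y, c * y = y * c.

Lemma xC i j : x i * x j = x j * x i.
Proof. by case: Hrel. Qed.

Lemma etauC i j : central (etau i j).
Proof. by case: Hrel => _ [_ [_ [_ [H _]]]]; apply: H. Qed.

Lemma dlC i j : dl i * dl j = dl j * dl i.
Proof. by case: Hrel => _ [H _]. Qed.

Lemma dlx i j : dl i * x j - x j * dl i = (i == j)%:R.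
Proof. by case: Hrel => _ [_ [H _]]. Qed.

Lemma cmul (u1 d1 u2 d2 : A) : central u2 -> (u1 * d1) * (u2 * d2) = u1 * u2 * (d1 * d2).
Proof. by move=> u2c; rewrite -!mulrA [d1 * (u2 * d2)]mulrA -u2c -mulrA. Qed.

Lemma duC i j : du i * du j = du j * du i.
Proof.
rewrite /dup !mulr_suml; under eq_bigr do rewrite mulr_sumr.
under [RHS]eq_bigr do rewrite mulr_sumr.
rewrite [RHS]exchange_big; apply: eq_bigr => c _; apply: eq_bigr => e _.
by rewrite (cmul _ _ _ (etauC j e)) (cmul _ _ _ (etauC i c)) dlC [etau i c * etau j e](etauC i c).
Qed.

Lemma du_x i j : du i * x j = x j * du i + etau i j.
Proof.
suff <- : du i * x j - x j * du i = etau i j by rewrite addrC subrK.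
rewrite /dup mulr_suml mulr_sumr -sumrB.
rewrite (bigD1 j) //= big1 ?addr0.
  by rewrite -mulrA [x j * (_ * _)]mulrA -(etauC i j (x j)) -mulrA -mulrBr dlx eqxx mulr1.
move=> c cj; rewrite -mulrA [x j * (_ * _)]mulrA -(etauC i c (x j)) -mulrA -mulrBr dlx.
by rewrite (negbTE cj) mulr0.
Qed.

Lemma central_prod (I : Type) (r : seq I) (P : pred I) (F : I -> A) :
  (forall i, central (F i)) -> central (\prod_(i <- r | P i) F i).
Proof.
move=> H; apply: (big_ind central) => //; first by move=> y; rewrite mul1r mulr1.
by move=> u v cu cv y; rewrite -mulrA cv mulrA cu mulrA.
Qed.

Lemma central_block B : central (eta_block etau a B).
Proof. by apply: central_prod => i; apply: central_prod => j; apply: etauC. Qed.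

Lemma prod_first_ord (F : 'I_l -> A) (S : {set 'I_l}) m :
  m \in S -> (forall i, i \in S -> (m <= i)%N) ->
  \prod_(i < l | i \in S) F i = F m * \prod_(i < l | i \in S :\ m) F i.
Proof.
move=> Sm H.
have E : index_enum 'I_l = enum 'I_l by rewrite enumT.
rewrite (big_first F (index_enum_uniq _) (mem_index_enum m) Sm); last first.
  by move=> i _ Si; rewrite E !index_enum_ord H.
by congr (_ * _); apply: eq_bigl => i; rewrite in_setD1 andbC.
Qed.

Lemma intA (k t : nat) (d : int) :
  ((1 + k)%N%:Z == d + t%:Z) = (k%:Z == d - 1 + t%:Z).
Proof. by apply/eqP/eqP; lia. Qed.

Lemma intB (k t : nat) (d : int) :
  ((1 + k)%N%:Z == d + (2 * (1 + t))%N%:Z) = (k%:Z == d + 1 + (2 * t)%N%:Z).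
Proof. by apply/eqP/eqP; lia. Qed.

Definition mixS (S : {set 'I_l}) (d : int) : A :=
  \sum_(T : {set 'I_l} | (T \subset S) && (#|S|%:Z == d + (2 * #|T|)%N%:Z))
     \prod_(i < l | i \in S) (if i \in T then du (a i) else x (a i)).

Lemma D1U1 (T : {set 'I_l}) m : ((m |: T) :\ m == T) = (m \notin T).
Proof.
case mT: (m \in T) => /=; last by rewrite setU1K ?mT ?eqxx.
by apply/negP => /eqP E; move: mT; rewrite -E setD11.
Qed.

Lemma mix_rec (S : {set 'I_l}) (m : 'I_l) (d : int) : m \in S -> (forall i, i \in S -> (m <= i)%N) ->
  mixS S d = x (a m) * mixS (S :\ m) (d - 1) + du (a m) * mixS (S :\ m) (d + 1).
Proof.
move=> Sm H; rewrite /mixS (bigID (fun T : {set 'I_l} => m \in T)) /= addrC; congr (_ + _).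
  rewrite mulr_sumr; apply: eq_big => T.
    rewrite subsetD1 (cardsD1 m S) Sm.
    by case: (T \subset S) (m \in T) => [] []; rewrite /= ?andbF ?andbT // intA.
  by case/andP => _ mT; rewrite (prod_first_ord _ Sm H) (negbTE mT).
rewrite mulr_sumr (reindex_onto (fun T' => m |: T') (fun T => T :\ m)) /=;
  last by move=> T /andP[_ mT]; rewrite setD1K.
apply: eq_big => T.
  rewrite D1U1 subsetD1 setU11 andbT.
  case mT: (m \in T); first by rewrite !andbF.
  rewrite subUset sub1set Sm cardsU1 mT (cardsD1 m S) Sm /= andbT.
  by case: (T \subset S) => //=; rewrite intB.
case/andP => _; rewrite D1U1 => mT.
rewrite (prod_first_ord _ Sm H) setU11; congr (_ * _); apply: eq_bigr => i.
by rewrite in_setD1 => /andP[im _]; rewrite in_setU1 (negbTE im).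
Qed.

Lemma prod_U1 (I : finType) (F : I -> A) (X : {set I}) i0 : i0 \notin X ->
  (forall i, i \in X -> F i0 * F i = F i * F i0) ->
  \prod_(i in i0 |: X) F i = F i0 * \prod_(i in X) F i.
Proof.
move=> iX C; rewrite (@big_comm_rem A I (index_enum I) (fun i => i \in i0 |: X) F i0 (index_enum_uniq _) (mem_index_enum i0) (setU11 i0 X)).
  congr (_ * _); apply: eq_bigl => i; rewrite in_setU1.
  by case: (i =P i0) => [->|] /=; rewrite ?(negbTE iX) ?andbT ?andbF.
move=> i; rewrite in_setU1 => /orP[/eqP->//|]; exact: C.
Qed.

Definition etaM (M : {set {set 'I_l}}) : A := \prod_(B in M) eta_block etau a B.

Lemma cetaM M : central (etaM M).
Proof. by apply: central_prod => B; apply: central_block. Qed.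

Lemma etaM_U1 B M : B \notin M -> etaM (B |: M) = eta_block etau a B * etaM M.
Proof.
move=> BM; rewrite /etaM prod_U1 // => C _; exact: central_block.
Qed.

Lemma eta_pair (m j : 'I_l) : (m < j)%N -> eta_block etau a [set m; j] = etau (a m) (a j).
Proof.
move=> mj; have mB : m \in [set m; j] by rewrite setU11.
rewrite /eta_block (prod_first_ord _ mB); last first.
  by move=> i; rewrite !inE => /orP[]/eqP->; [exact: leqnn | exact: ltnW].
rewrite (big_pred1 j); last first.
  move=> k /=; rewrite !inE; case: (k =P j) => [->|_]; first by rewrite orbT mj.
  by rewrite orbF; case: (k =P m) => [->|]; rewrite ?ltnn.
rewrite big1 ?mulr1 // => i; rewrite !inE => /andP[im /orP[/eqP Eim|/eqP ->]].
  by rewrite Eim eqxx in im.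
apply: big1 => k; rewrite !inE => /andP[/orP[]/eqP-> jk]; first by have := ltn_trans mj jk; rewrite ltnn.
by rewrite ltnn in jk.
Qed.

Definition oT (S : {set 'I_l}) M X : A :=
  etaM M * \prod_(k < l | k \in X) x (a k) *
  \prod_(k < l | k \in (S :\: cover M) :\: X) du (a k).
Definition goodM (S : {set 'I_l}) M := is_partial_matching M && (cover M \subset S).
Definition goodX (S : {set 'I_l}) M (d : int) (X : {set 'I_l}) :=
  (X \subset S :\: cover M) && (#|X|%:Z == d + #|(S :\: cover M) :\: X|%:Z).
Definition ordS (S : {set 'I_l}) (d : int) : A :=
  \sum_(M | goodM S M) \sum_(X | goodX S M d X) oT S M X.

Lemma intC (k t : nat) (d : int) :
  (k%:Z == d + (1 + t)%N%:Z) = (k%:Z == d + 1 + t%:Z).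
Proof. by apply/eqP/eqP; lia. Qed.

Lemma intD (k t : nat) (d : int) :
  (k%:Z == d + t%:Z) = ((1 + k)%N%:Z == d + 1 + t%:Z).
Proof. by apply/eqP/eqP; lia. Qed.

Lemma part1 (S : {set 'I_l}) (m : 'I_l) (d : int) M :
  m \in S -> cover M \subset S :\ m ->
  \sum_(X | goodX S M d X) oT S M X =
  x (a m) * \sum_(X | goodX (S :\ m) M (d - 1) X) oT (S :\ m) M X +
  \sum_(X | goodX (S :\ m) M (d + 1) X) etaM M * \prod_(k < l | k \in X) x (a k) *
     (du (a m) * \prod_(k < l | k \in ((S :\ m) :\: cover M) :\: X) du (a k)).
Proof.
move=> Sm cM.
have mc : m \notin cover M.
  by apply/negP => /(subsetP cM); rewrite !inE eqxx.
set U' := (S :\ m) :\: cover M.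
have U : S :\: cover M = m |: U'.
  apply/setP => y; rewrite !inE; case: (y =P m) => [->|] //=.
  by rewrite mc Sm.
have mU' : m \notin U' by rewrite /U' in_setD setD11 andbF.
have nsub X : m \in X -> (X \subset U') = false.
  by move=> mX; apply/negP => /subsetP /(_ m mX); rewrite (negbTE mU').
rewrite /goodX -/U' U (bigID (fun X : {set 'I_l} => m \in X)) /=; congr (_ + _).
  rewrite mulr_sumr (reindex_onto (fun X => m |: X) (fun X => X :\ m)) /=; last first.
    by move=> X /andP[_ mX]; rewrite setD1K.
  apply: eq_big => X.
    rewrite D1U1 setU11 andbT.
    case mX: (m \in X) => /=; first by rewrite andbF nsub.
    rewrite andbT subUset sub1set setU11 subU1 ?mX // cardsU1 mX setDUU1 //.
    by case: (X \subset U') => //=; rewrite intA.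
  case/andP => _; rewrite D1U1 => mX.
  rewrite /oT U setDUU1 // prod_U1 //; last by move=> i _; apply: xC.
  by rewrite mulrA (cetaM M (x (a m))) !mulrA.
apply: eq_big => X.
  case mX: (m \in X); rewrite /= ?andbF ?andbT; first by rewrite nsub.
  have mUX : m \notin U' :\: X by rewrite in_setD (negbTE mU') andbF.
  rewrite subU1 ?mX // setDU1X ?mX // cardsU1 mUX.
  by case: (X \subset U') => //=; rewrite intC.
case/andP => _ mX.
rewrite /oT U setDU1X // prod_U1 //; last by move=> i _; apply: duC.
by rewrite in_setD (negbTE mU') andbF.
Qed.

Definition Hj (S : {set 'I_l}) (m j : 'I_l) M X : A :=
  etau (a m) (a j) * (etaM M * \prod_(k < l | k \in X :\ j) x (a k) *
     \prod_(k < l | k \in ((S :\ m) :\: cover M) :\: X) du (a k)).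

Lemma X_part (S : {set 'I_l}) (m j : 'I_l) (d : int) M' :
  m \in S -> (m < j)%N -> j \in S :\ m -> goodM ((S :\ m) :\ j) M' ->
  \sum_(X | goodX S ([set m; j] |: M') d X) oT S ([set m; j] |: M') X =
  \sum_(X : {set 'I_l} | (j \in X) && goodX (S :\ m) M' (d + 1) X) Hj S m j M' X.
Proof.
move=> Sm mj jS /andP[pM cM].
set B := [set m; j].
have BM : B \notin M'.
  apply/negP => BM; have : m \in cover M' by apply/coverP; exists B; rewrite // setU11.
  by move/(subsetP cM); rewrite !inE eqxx andbF.
set U' := (S :\ m) :\: cover M'.
have jU' : j \in U'.
  rewrite !inE; move: jS; rewrite !inE => /andP[-> ->]; rewrite andbT /=.
  by rewrite andbT; apply/negP => /(subsetP cM); rewrite !inE eqxx.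
have E : S :\: cover (B |: M') = U' :\ j.
  apply/setP => y; rewrite cover_U1 !inE negb_or.
  by case: (y == j); case: (y == m); case: (y \in cover M'); case: (y \in S).
rewrite /goodX E -/U' (reindex_onto (fun X => X :\ j) (fun X => j |: X)) /=; last first.
  move=> X /andP[sX _]; rewrite setU1K //; apply/negP => /(subsetP sX).
  by rewrite !inE eqxx.
apply: eq_big => X.
  rewrite U1D1; case jX: (j \in X); last by rewrite !andbF.
  rewrite andbT /= subD1D1 // setDD1D1 // (cardsD1 j X) jX.
  by case: (X \subset U') => //=; rewrite intD.
case/andP => _; rewrite U1D1 => jX.
rewrite /oT /Hj E etaM_U1 // eta_pair // setDD1D1 //.
by rewrite !mulrA.
Qed.

Lemma du_prod (m : 'I_l) (X : {set 'I_l}) :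
  du (a m) * \prod_(k < l | k \in X) x (a k) =
  \prod_(k < l | k \in X) x (a k) * du (a m) +
  \sum_(j < l | j \in X) etau (a m) (a j) * \prod_(k < l | k \in X :\ j) x (a k).
Proof.
rewrite (@comm_prod A 'I_l (index_enum _) (fun k => k \in X) (du (a m))
  (fun k => x (a k)) (fun k => etau (a m) (a k)) (index_enum_uniq _)
  (fun i => du_x _ _) (fun i y => etauC _ _ y)).
congr (_ + _); apply: eq_bigr => j _; congr (_ * _).
by apply: eq_bigl => k; rewrite in_setD1 andbC.
Qed.

Lemma ord_rec (S : {set 'I_l}) (m : 'I_l) (d : int) :
  m \in S -> (forall i, i \in S -> (m <= i)%N) ->
  ordS S d = x (a m) * ordS (S :\ m) (d - 1) + du (a m) * ordS (S :\ m) (d + 1).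
Proof.
move=> Sm Hm.
rewrite {1}/ordS (bigID (fun M : {set {set 'I_l}} => m \in cover M)) /=.
have P1 : \sum_(M | goodM S M && (m \notin cover M)) \sum_(X | goodX S M d X) oT S M X =
  \sum_(M | goodM (S :\ m) M)
    (x (a m) * \sum_(X | goodX (S :\ m) M (d - 1) X) oT (S :\ m) M X +
     \sum_(X | goodX (S :\ m) M (d + 1) X) etaM M * \prod_(k < l | k \in X) x (a k) *
     (du (a m) * \prod_(k < l | k \in ((S :\ m) :\: cover M) :\: X) du (a k))).
  apply: eq_big => M; first by rewrite /goodM subsetD1 andbA.
  case/andP => /andP[pM cS] mc; apply: part1 => //.
  by rewrite subsetD1 cS.
have P2 : \sum_(M | goodM S M && (m \in cover M)) \sum_(X | goodX S M d X) oT S M X =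
  \sum_(M | goodM (S :\ m) M) \sum_(X | goodX (S :\ m) M (d + 1) X)
     \sum_(j | j \in X) Hj S m j M X.
  transitivity (\sum_(M | goodM S M && (m \in cover M)) \sum_(j | [set m; j] \in M)
     \sum_(X | goodX S M d X) oT S M X).
    apply: eq_bigr => M /andP[/andP[pM _] mc]; have [j0 Hj0] := partner pM mc.
    by rewrite (big_pred1 j0).
  rewrite (exchange_big_dep predT) //=.
  transitivity (\sum_j \sum_(M' | (j \in S :\ m) && goodM ((S :\ m) :\ j) M')
     \sum_(X : {set 'I_l} | (j \in X) && goodX (S :\ m) M' (d + 1) X) Hj S m j M' X).
    apply: eq_bigr => j _.
    rewrite (reindex_onto (fun M' => [set m; j] |: M') (fun M => M :\ [set m; j])) /=;
      last by move=> M /andP[_ BM]; rewrite setD1K.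
    apply: eq_big => M'; first by rewrite /goodM match_split.
    move=> HP; have /andP[jS gM] : (j \in S :\ m) && goodM ((S :\ m) :\ j) M'.
      by move: HP; rewrite /goodM match_split.
    apply: X_part => //.
    move: jS; rewrite in_setD1 => /andP[jm jS]; rewrite ltn_neqAle Hm // andbT.
    by rewrite eq_sym.
  apply: triple_eq => j M X.
  rewrite /goodM /goodX subsetD1 /=.
  case jX: (j \in X); rewrite /= ?andbF ?andbT //.
  case sX: (X \subset (S :\ m) :\: cover M); rewrite /= ?andbF ?andbT //.
  have := subsetP sX j jX; rewrite in_setD => /andP[-> ->] /=.
  by case: (is_partial_matching M); case: (cover M \subset S :\ m); case: (_ == _).
rewrite P1 P2 big_split /= -mulr_sumr addrCA; congr (_ + _).
rewrite -big_split /ordS mulr_sumr; apply: eq_bigr => M _.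
rewrite -big_split mulr_sumr; apply: eq_bigr => X _ /=.
have -> : du (a m) * oT (S :\ m) M X =
  etaM M * (du (a m) * \prod_(k < l | k \in X) x (a k)) *
  \prod_(k < l | k \in ((S :\ m) :\: cover M) :\: X) du (a k).
  by rewrite /oT !mulrA cetaM.
rewrite du_prod mulrDr mulrDl [RHS]addrC; congr (_ + _); last by rewrite !mulrA.
rewrite mulr_sumr mulr_suml; apply: eq_bigr => j _.
by rewrite /Hj !mulrA cetaM.
Qed.

Lemma mix0 d : mixS set0 d = (d == 0)%:R.
Proof.
rewrite /mixS (eq_bigl (fun T => (T == set0) && (d == 0))); last first.
  move=> T; rewrite subset0 cards0; case: (T =P set0) => [->|] //=.
  by rewrite cards0; apply/eqP/eqP; lia.
case: (d =P 0) => _.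
  rewrite (big_pred1 set0); last by move=> T; rewrite andbT.
  by rewrite big_pred0 // => i; rewrite in_set0.
by rewrite big_pred0 // => T; rewrite andbF.
Qed.

Lemma ord0 d : ordS set0 d = (d == 0)%:R.
Proof.
have gM : forall M, goodM set0 M = (M == set0).
  move=> M; apply/idP/eqP => [/andP[/andP[/forall_inP H2 _] cS]|->].
    apply/setP => B; rewrite in_set0; apply/negP => BM.
    case/cards2P: (H2 B BM) => y [z [_ E]].
    have : y \in cover M by apply/coverP; exists B; rewrite // E setU11.
    by move/(subsetP cS); rewrite in_set0.
  apply/andP; split; first (apply/andP; split).
  - by apply/forall_inP => B; rewrite in_set0.
  - by apply/trivIsetP => B C; rewrite in_set0.
  - by apply/subsetP => y /coverP [B B0 _]; rewrite in_set0 in B0.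
rewrite /ordS (big_pred1 set0); last exact: gM.
have gX : forall X, goodX set0 set0 d X = (X == set0) && (d == 0).
  move=> X; rewrite /goodX set0D subset0; case: (X =P set0) => [->|] //=.
  by rewrite set0D !cards0; apply/eqP/eqP; lia.
rewrite (eq_bigl _ _ gX); case: (d =P 0) => _.
  rewrite (big_pred1 set0); last by move=> T; rewrite andbT.
  by rewrite /oT /etaM !big_pred0 ?mulr1 // => i; rewrite !inE ?andbF.
by rewrite big_pred0 // => T; rewrite andbF.
Qed.

Lemma mix_ord S d : mixS S d = ordS S d.
Proof.
move: {2}#|S| (leqnn #|S|) => k; elim: k S d => [|k IH] S d hS.
  by move: hS; rewrite leqn0 cards_eq0 => /eqP->; rewrite mix0 ord0.
case: (set_0Vmem S) => [->|[i0 Si0]]; first by rewrite mix0 ord0.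
case: (@arg_minnP _ i0 (fun i : 'I_l => i \in S) (fun i => val i) Si0) => m Sm Hm.
rewrite (@mix_rec S m d Sm Hm) (@ord_rec S m d Sm Hm) !IH //.
all: by move: hS; rewrite (cardsD1 m S) Sm add1n ltnS.
Qed.

Lemma main_sec d : mixed_sum d x du a = ordered_sum d x du etau a.
Proof.
have -> : mixed_sum d x du a = mixS setT d.
  rewrite /mixed_sum /mixS; apply: eq_big => [T|T _].
    by rewrite subsetT cardsT card_ord -PoszD eqz_nat.
  by apply: eq_bigl => i; rewrite in_setT.
have -> : ordered_sum d x du etau a = ordS setT d.
  rewrite /ordered_sum /ordS; apply: eq_big => [M|M _]; first by rewrite /goodM subsetT andbT.
  apply: eq_big => [X|X _]; first by rewrite /goodX setTD -PoszD eqz_nat.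
  by rewrite /oT setTD.
exact: mix_ord.
Qed.

End Main.


End Aux.

Theorem mainTheorem5 (R : realType) (A : algType (Ctype R)) (n : nat)
  (x dl : 'I_n -> A) (etal etau : 'I_n -> 'I_n -> A)
  (Hrel : weyl_rel x dl etal etau)
  (l d : nat) (a : 'I_l -> 'I_n) :
  mixed_sum d x (dup etau dl) a = ordered_sum d x (dup etau dl) etau a.
Proof. exact: (Aux.main_sec Hrel). Qed.
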